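(* Let $t_0\in\mathbb R$ and let $g,h,y$ be non-negative locally integrable functions on $(t_0,\infty)$ such that $dy/dt$ is locally integrable on $(t_0,\infty)$ and $$\frac{dy}{dt}\le g(t)y(t)+h(t)\quad\forall t\ge t_0 .$$ Suppose there are $a_1,a_2,a_3\ge0$ with $\int_t^{t+1}g\,ds\le a_1$, $\int_t^{t+1}h\,ds\le a_2$, $\int_t^{t+1}y\,ds\le a_3$ for all $t\ge t_0$, and that for all $t>t_0$, $\int_{t_0}^t\big(g(s)y(s)+h(s)\big)ds\le P(t)$ for a non-negative function $P$. Then for all $t>t_0$, $$y(t)\le\Big(\frac{a_3}{t-t_0}+2a_2+a_3\Big)e^{a_1}+P(t).$$
   Context: The uniform Gronwall inequality (used as a known fact): under the first set of hypotheses with integrals over windows of length $r>0$ bounded by $a_1,a_2,a_3$, one has $y(t+r)\le(a_3/r+a_2)e^{a_1}$ for all $t\ge t_0$. *)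

(* Defs.v *)
From HB Require Import structures.
From mathcomp Require Import all_boot all_order all_algebra.
From mathcomp Require Import all_classical all_reals all_analysis.

(* Main.v *)
Require Import Defs.
From HB Require Import structures.
From mathcomp Require Import all_boot all_order all_algebra.
From mathcomp Require Import all_classical all_reals all_analysis.
From mathcomp Require Import measurable_realfun lra.
Import Order.TTheory GRing.Theory Num.Theory.
Local Open Scope classical_set_scope.
Local Open Scope ring_scope.

Lemma mfS (R : realType) (t0 : R) (f : R -> R) (A : set R) :
  measurable_fun `]t0, +oo[ f -> measurable A -> A `<=` `]t0, +oo[ ->
  measurable_fun A (fun x => (f x)%:E).
Proof.
move=> mf mA sA; apply/measurable_EFinP.
exact: (measurable_funS _ sA mf).
Qed.

Arguments mfS {R t0 f A}.

Lemma itv_subc (R : realType) (t0 a b : R) : t0 < a ->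
  `[a, b] `<=` `]t0, +oo[.
Proof.
move=> ha x /=; rewrite !in_itv /= andbT => /andP[hx _]; exact: lt_le_trans ha hx.
Qed.

Lemma itv_subo (R : realType) (t0 a b : R) : t0 <= a ->
  `]a, b] `<=` `]t0, +oo[.
Proof.
move=> ha x /=; rewrite !in_itv /= andbT => /andP[hx _]; exact: le_lt_trans ha hx.
Qed.

Arguments itv_subc {R t0 a} b.
Arguments itv_subo {R t0 a} b.

Lemma stepA {R : realType} {t0 : R} {g h y dy P : R -> R} :
  measurable_fun `]t0, +oo[ g -> measurable_fun `]t0, +oo[ h ->
  measurable_fun `]t0, +oo[ y -> measurable_fun `]t0, +oo[ dy ->
  (forall t, t0 < t -> 0 <= g t) ->
  (forall t, t0 < t -> 0 <= h t) ->
  (forall t, t0 < t -> 0 <= y t) ->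
  (forall s t, t0 < s -> s <= t ->
     ((y t - y s)%:E = \int[lebesgue_measure]_(x in `[s, t]) (dy x)%:E)%E) ->
  (forall t, t0 < t -> dy t <= g t * y t + h t) ->
  (forall t, t0 < t ->
     (\int[lebesgue_measure]_(x in `[t0, t]) (g x * y x + h x)%:E
        <= (P t)%:E)%E) ->
  forall s t, t0 < s -> s <= t -> y t - y s <= P t.
Proof.
move=> mg mh my mdy g0 h0 y0 ftc dyle Ple s t ts st.
have tt : t0 < t by exact: lt_le_trans ts st.
have mFR : measurable_fun `]t0, +oo[ (fun x => g x * y x + h x).
  by apply: measurable_funD => //; exact: measurable_funM.
have F0 : forall x, t0 < x -> 0 <= g x * y x + h x.
  by move=> x hx; rewrite addr_ge0 ?mulr_ge0 ?g0 ?y0 ?h0.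
rewrite -lee_fin ftc// integralE.
apply: (le_trans (y := (\int[lebesgue_measure]_(x in `[s, t]) (g x * y x + h x)%:E)%E)).
  rewrite -[X in (_ <= X)%E]sube0; apply: leeB; last first.
    by apply: integral_ge0 => x _; exact: funeneg_ge0.
  apply: ge0_le_integral. all: try exact: measurable_itv.
  - by move=> x _; exact: funepos_ge0.
  - apply: measurable_funepos; exact (mfS mdy (measurable_itv _) (itv_subc t ts)).
  - exact (mfS mFR (measurable_itv _) (itv_subc t ts)).
  move=> x; rewrite /= in_itv /= => /andP[h1 h2].
  have hx' : t0 < x by exact: lt_le_trans ts h1.
  by rewrite funeposE ge_max !lee_fin dyle//= F0.
apply: (le_trans (y := (\int[lebesgue_measure]_(x in `]t0, t]) (g x * y x + h x)%:E)%E)).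
  apply: ge0_subset_integral => //.
  - apply: (mfS mFR) => //; exact: itv_subo.
  - by move=> x; rewrite /= in_itv /= => /andP[hx _]; rewrite lee_fin F0.
  - move=> x; rewrite /= !in_itv /= => /andP[h1 ->]; rewrite andbT.
    exact: lt_le_trans ts h1.
rewrite integral_itv_obnd_cbnd; first exact: Ple.
apply: (mfS mFR) => //; exact: itv_subo.
Qed.

Lemma stepB {R : realType} {t0 : R} {y : R -> R} {a3 c u t : R} :
  measurable_fun `]t0, +oo[ y ->
  (forall t, t0 < t -> 0 <= y t) ->
  (forall t, t0 <= t ->
     (\int[lebesgue_measure]_(x in `[t, (t + 1)%R]) (y x)%:E <= a3%:E)%E) ->
  t0 <= u -> u < t -> t <= u + 1 -> 0 <= c ->
  (forall s, u < s -> s <= t -> c <= y s) ->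
  c * (t - u) <= a3.
Proof.
move=> my y0 Hy tu ut tu1 c0 cy.
rewrite -lee_fin.
have -> : ((c * (t - u))%:E = \int[lebesgue_measure]_(x in `]u, t]) (cst c%:E) x)%E.
  rewrite integral_cst //= lebesgue_measure_itv /= lte_fin ut.
  by rewrite -EFinD -EFinM.
apply: (le_trans (y := (\int[lebesgue_measure]_(x in `]u, t]) (y x)%:E)%E)).
  apply: ge0_le_integral => //.
  - apply: (mfS my) => //; exact: itv_subo.
  - by move=> x; rewrite /= in_itv /= => /andP[h1 h2]; rewrite lee_fin cy.
apply: (le_trans (y := (\int[lebesgue_measure]_(x in `]u, (u + 1)%R]) (y x)%:E)%E)).
  apply: ge0_subset_integral => //.
  - apply: (mfS my) => //; exact: itv_subo.
  - move=> x; rewrite /= in_itv /= => /andP[hx _]; rewrite lee_fin y0 //.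
    exact: le_lt_trans tu hx.
  - move=> x; rewrite /= !in_itv /= => /andP[h1 h2]; rewrite h1 /=.
    exact: le_trans h2 tu1.
rewrite integral_itv_obnd_cbnd; first exact: Hy.
apply: (mfS my) => //; exact: itv_subo.
Qed.

Theorem mainTheorem18 (R : realType) (t0 : R) (g h y dy P : R -> R)
  (a1 a2 a3 : R) :
  (* g, h, y non-negative and locally integrable on (t0, oo) *)
  locally_integrable `]t0, +oo[ g ->
  locally_integrable `]t0, +oo[ h ->
  locally_integrable `]t0, +oo[ y ->
  (forall t, t0 < t -> 0 <= g t) ->
  (forall t, t0 < t -> 0 <= h t) ->
  (forall t, t0 < t -> 0 <= y t) ->
  (* dy = dy/dt is locally integrable and y is its primitive on (t0, oo) *)
  locally_integrable `]t0, +oo[ dy ->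
  (forall s t, t0 < s -> s <= t ->
     ((y t - y s)%:E = \int[lebesgue_measure]_(x in `[s, t]) (dy x)%:E)%E) ->
  (* differential inequality *)
  (forall t, t0 < t -> dy t <= g t * y t + h t) ->
  0 <= a1 -> 0 <= a2 -> 0 <= a3 ->
  (forall t, t0 <= t ->
     (\int[lebesgue_measure]_(x in `[t, (t + 1)%R]) (g x)%:E <= a1%:E)%E) ->
  (forall t, t0 <= t ->
     (\int[lebesgue_measure]_(x in `[t, (t + 1)%R]) (h x)%:E <= a2%:E)%E) ->
  (forall t, t0 <= t ->
     (\int[lebesgue_measure]_(x in `[t, (t + 1)%R]) (y x)%:E <= a3%:E)%E) ->
  (forall t, t0 < t -> 0 <= P t) ->
  (forall t, t0 < t ->
     (\int[lebesgue_measure]_(x in `[t0, t]) (g x * y x + h x)%:E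
        <= (P t)%:E)%E) ->
  forall t, t0 < t ->
    y t <= (a3 / (t - t0) + 2 * a2 + a3) * expR a1 + P t.
Proof.
move=> [mg _ _] [mh _ _] [my _ _] g0 h0 y0 [mdy _ _] ftc dyle a10 a20 a30
  Hg Hh Hy P0 Ple t tt.
have A := stepA mg mh my mdy g0 h0 y0 ftc dyle Ple.
have e1 : 1 <= expR a1.
  by apply: le_trans (expR_ge1Dx a1); lra.
have Q0 : 0 <= a3 / (t - t0) by rewrite divr_ge0 // subr_ge0 ltW.
set Q := a3 / (t - t0) in Q0 *.
have Pt := P0 t tt.
have key : y t <= Q + a3 + P t.
  case: (leP (y t) (P t)) => hyP; first lra.
  have c0 : 0 <= y t - P t by lra.
  case: (leP t (t0 + 1)) => ht.
    have := stepB my y0 Hy (lexx t0) tt ht c0.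
    have cy : forall s, t0 < s -> s <= t -> y t - P t <= y s.
      by move=> s h1 h2; have := A s t h1 h2; lra.
    move=> /(_ cy) H.
    have : y t - P t <= Q.
      rewrite /Q ler_pdivlMr ?subr_gt0 //.
    lra.
  have H1 : t0 <= t - 1 by lra.
  have H2 : t - 1 < t by lra.
  have H3 : t <= t - 1 + 1 by lra.
  have := stepB my y0 Hy H1 H2 H3 c0.
  have cy : forall s, t - 1 < s -> s <= t -> y t - P t <= y s.
    move=> s h1 h2; have := A s t (le_lt_trans H1 h1) h2; lra.
  move=> /(_ cy).
  have -> : t - (t - 1) = 1 by lra.
  lra.
have : Q + 2 * a2 + a3 <= (Q + 2 * a2 + a3) * expR a1.
  by rewrite ler_peMr //; lra.
lra.
Qed.
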